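(* Let $R$ be a Noetherian ring and $E$ an $R$-module of rank $e$, of projective dimension one, minimally generated by $n$ elements, with minimal resolution $0\to R^{n-e}\xrightarrow{\varphi}R^n\to E\to0$. For $0\leq i\leq n-e$ let $\varphi_i$ be the submatrix of $\varphi$ obtained by deleting its last $i$ columns and $E_i=\mathrm{coker}\,\varphi_i$. Then: (a) for $1\leq i\leq n-e-1$, $E_i$ is an $R$-module of projective dimension one with $\mathrm{rank}\,E_i=e+i$; (b) if $E_i$ satisfies $G_s$, then $E_j$ satisfies $G_s$ for all $j\geq i$.
   Context: A module $M$ has rank $r$ if $M\otimes_R\mathrm{Quot}(R)\cong\mathrm{Quot}(R)^r$, with $\mathrm{Quot}(R)$ the total ring of quotients. A module $M$ of rank $r$ satisfies $G_s$ if $\mu(M_{\mathfrak p})\leq\dim R_{\mathfrak p}+r-1$ for every prime $\mathfrak p$ with $1\leq\dim R_{\mathfrak p}\leq s-1$ ($\mu$ = minimal number of generators). *)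

(* Defs.v *)
From HB Require Import structures.
From mathcomp Require Import all_boot all_order all_algebra.
Set Implicit Arguments. Unset Strict Implicit. Unset Printing Implicit Defensive.
Import GRing.Theory.
Local Open Scope ring_scope.

(* Modules are given by presentations: a matrix
   A : 'M[R]_(n, m) acting on column vectors defines coker A = R^n / A R^m. *)

Section Defs.
Variable R : comNzRingType.

Definition is_ideal (I : R -> Prop) : Prop :=
  I 0 /\ (forall a b, I a -> I b -> I (a + b)) /\ (forall a b, I b -> I (a * b)).

Definition is_prime (P : R -> Prop) : Prop :=
  is_ideal P /\ ~ P 1 /\ (forall a b, P (a * b) -> P a \/ P b).

Definition is_maximal (M : R -> Prop) : Prop :=
  is_ideal M /\ ~ M 1 /\
  (forall J : R -> Prop, is_ideal J -> (forall x, M x -> J x) ->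
     J 1 \/ (forall x, J x -> M x)).

Definition noetherian : Prop :=
  forall I : R -> Prop, is_ideal I ->
    exists k (g : 'I_k -> R), forall x, I x <-> exists c : 'I_k -> R, x = \sum_(i < k) c i * g i.

Definition nonzerodivisor (a : R) : Prop := forall b, a * b = 0 -> b = 0.

Definition prime_chain_to (p : R -> Prop) (k : nat) : Prop :=
  exists q : nat -> (R -> Prop),
    (forall i, (i <= k)%N -> is_prime (q i)) /\
    (forall i, (i < k)%N -> (forall x, q i x -> q i.+1 x) /\ exists x, q i.+1 x /\ ~ q i x) /\
    (forall x, q k x <-> p x).

Definition height_eq (p : R -> Prop) (d : nat) : Prop :=
  prime_chain_to p d /\ ~ prime_chain_to p d.+1.

Definition in_span_mod n m (A : 'M[R]_(n, m)) k (x : 'I_k -> 'cV[R]_n) (y : 'cV[R]_n) : Prop :=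
  exists (c : 'I_k -> R) (d : 'cV[R]_m), y = \sum_(i < k) c i *: x i + A *m d.

(* coker A has rank r: coker A (x) Quot(R) = Quot(R)^r, i.e. there are
   x_1..x_r in coker A whose images form a Quot(R)-basis of coker A (x) Quot(R). *)
Definition has_rank n m (A : 'M[R]_(n, m)) (r : nat) : Prop :=
  exists x : 'I_r -> 'cV[R]_n,
    (forall y : 'cV[R]_n, exists s, nonzerodivisor s /\ in_span_mod A x (s *: y)) /\
    (forall c : 'I_r -> R,
        (exists t, nonzerodivisor t /\ exists d : 'cV[R]_m,
            t *: (\sum_(i < r) c i *: x i) = A *m d) ->
        forall i, c i = 0).

(* (coker A)_p is generated by k elements *)
Definition mu_loc_le (p : R -> Prop) n m (A : 'M[R]_(n, m)) (k : nat) : Prop :=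
  exists x : 'I_k -> 'cV[R]_n,
    forall y : 'cV[R]_n, exists s, ~ p s /\ in_span_mod A x (s *: y).

Definition mu_le n m (A : 'M[R]_(n, m)) (k : nat) : Prop :=
  exists x : 'I_k -> 'cV[R]_n, forall y : 'cV[R]_n, in_span_mod A x y.

Definition mu_eq n m (A : 'M[R]_(n, m)) (k : nat) : Prop :=
  mu_le A k /\ forall k', (k' < k)%N -> ~ mu_le A k'.

(* 0 -> R^m --A--> R^n -> coker A -> 0 is exact and coker A is not projective,
   i.e. the sequence does not split: projective dimension exactly one. *)
Definition pd_one n m (A : 'M[R]_(n, m)) : Prop :=
  (forall c : 'cV[R]_m, A *m c = 0 -> c = 0) /\
  ~ (exists B : 'M[R]_(m, n), B *m A = 1%:M).

(* minimal resolution: all entries of A lie in every maximal ideal *)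
Definition minimal_pres n m (A : 'M[R]_(n, m)) : Prop :=
  forall M : R -> Prop, is_maximal M -> forall i j, M (A i j).

Definition Gs_cond (s r : nat) n m (A : 'M[R]_(n, m)) : Prop :=
  forall p, is_prime p -> forall d, height_eq p d ->
    (1 <= d)%N -> (d <= s - 1)%N -> mu_loc_le p A (d + r).-1.

Definition satisfies_G (s : nat) n m (A : 'M[R]_(n, m)) : Prop :=
  exists r, has_rank A r /\ Gs_cond s r A.

Definition dropcols n m (i : nat) (A : 'M[R]_(n, m)) : 'M[R]_(n, m - i) :=
  colsub (fun j : 'I_(m - i) => widen_ord (leq_subr i m) j) A.

End Defs.

(* Main.v *)
Require Import Defs.
From HB Require Import structures.
From mathcomp Require Import all_boot all_order all_algebra.
From mathcomp Require Import zify.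
From Stdlib Require Import Classical ClassicalEpsilon.
Set Implicit Arguments. Unset Strict Implicit. Unset Printing Implicit Defensive.
Import GRing.Theory.
Local Open Scope ring_scope.

Section Aux.
Variable R : comNzRingType.
Variables n m : nat.
Implicit Types A : 'M[R]_(n, m).

Definition ek (k : nat) : 'cV[R]_m := \col_(o < m) ((o : nat) == k)%:R.

Definition inim (k : nat) A (v : 'cV[R]_n) : Prop :=
  exists d : 'cV[R]_m, (forall o : 'I_m, (k <= o)%N -> d o 0 = 0) /\ v = A *m d.

Definition dget (d : 'cV[R]_m) (k : nat) : R :=
  \sum_(o < m) (if (o : nat) == k then d o 0 else 0).

Lemma dgetE d (o : 'I_m) : dget d o = d o 0.
Proof.
rewrite /dget (bigD1 o) //= eqxx big1 ?addr0 // => o' Ho'.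
case: eqP => // /val_inj E; by rewrite E eqxx in Ho'.
Qed.

Lemma inim_step k A v : inim k.+1 A v ->
  exists c v1, inim k A v1 /\ v = v1 + c *: (A *m ek k).
Proof.
case=> d [Hd ->].
exists (dget d k), (A *m \col_o (if (o < k)%N then d o 0 else 0)); split.
  exists (\col_o (if (o < k)%N then d o 0 else 0)); split => // o Ho.
  by rewrite mxE ltnNge Ho.
rewrite scalemxAr -mulmxDr; congr (_ *m _); apply/matrixP => o z.
rewrite (ord1 z) !mxE.
case: (ltngtP o k) => Hok.
- by rewrite mulr0 addr0.
- by rewrite Hd // mulr0 addr0.
- by rewrite -Hok dgetE add0r mulr1.
Qed.

Lemma inim_back k A (d : 'cV[R]_m) c : (forall o : 'I_m, (k <= o)%N -> d o 0 = 0) ->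
  inim k.+1 A (A *m (d - c *: ek k)).
Proof.
move=> Hd; exists (d - c *: ek k); split => // o Ho.
rewrite !mxE Hd ?(ltnW Ho) //.
by rewrite (gtn_eqF Ho) mulr0 subr0.
Qed.

Lemma inim_all A v : inim m A v <-> exists d, v = A *m d.
Proof.
split; first by case=> d [_ ->]; exists d.
case=> d ->; exists d; split => // o Ho.
by move: (ltn_ord o); rewrite ltnNge Ho.
Qed.

Definition rkP (P : 'cV[R]_n -> Prop) (r : nat) : Prop :=
  exists x : 'I_r -> 'cV[R]_n,
    (forall y, exists s, nonzerodivisor s /\
        exists (c : 'I_r -> R) v, P v /\ s *: y = \sum_(i < r) c i *: x i + v) /\
    (forall c : 'I_r -> R,
        (exists t, nonzerodivisor t /\ exists v, P v /\ t *: (\sum_(i < r) c i *: x i) = v) ->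
        forall i, c i = 0).

Definition muP (p : R -> Prop) (P : 'cV[R]_n -> Prop) (k : nat) : Prop :=
  exists x : 'I_k -> 'cV[R]_n,
    forall y, exists s, ~ p s /\
        exists (c : 'I_k -> R) v, P v /\ s *: y = \sum_(i < k) c i *: x i + v.

Lemma unlift_widen r (a : 'I_r) (H : (r <= r.+1)%N) : unlift ord_max (widen_ord H a) = Some a.
Proof.
have -> : widen_ord H a = lift ord_max a by apply/val_inj; exact: (esym (lift_max a)).
by rewrite liftK.
Qed.

Definition xext r (x : 'I_r -> 'cV[R]_n) (w : 'cV[R]_n) (o : 'I_r.+1) : 'cV[R]_n :=
  if unlift ord_max o is Some a then x a else w.

Lemma sum_xext r (x : 'I_r -> 'cV[R]_n) w (c : 'I_r.+1 -> R) :
  \sum_(i < r.+1) c i *: xext x w i =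
  \sum_(a < r) c (widen_ord (leqnSn r) a) *: x a + c ord_max *: w.
Proof.
rewrite big_ord_recr /= /xext unlift_none; congr (_ + _); apply eq_bigr => a _.
by rewrite unlift_widen.
Qed.

Lemma rk_step A k r : (forall c : 'cV[R]_m, A *m c = 0 -> c = 0) -> (k < m)%N ->
  rkP (inim k.+1 A) r -> rkP (inim k A) r.+1.
Proof.
move=> Hinj Hkm [x [Hsp Hind]].
exists (xext x (A *m ek k)); split.
- move=> y; have [s [Hs [c [v [Hv Hy]]]]] := Hsp y.
  have [c' [v1 [Hv1 Ev]]] := inim_step Hv.
  exists s; split => //.
  exists (fun o : 'I_ _.+1 => if unlift ord_max o is Some a then c a else c'), v1; split => //.
  rewrite sum_xext unlift_none Hy Ev.
  rewrite [in X in _ = X](eq_bigr (fun a => c a *: x a)); last by move=> a _; rewrite unlift_widen.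
  by rewrite addrA addrAC.
- move=> c [t [Ht [v [[d [Hd ->]] Ev]]]].
  rewrite sum_xext in Ev.
  have Hc : forall a, c (widen_ord (leqnSn r) a) = 0.
    apply: Hind; exists t; split => //.
    exists (A *m (d - (t * c ord_max) *: ek k)); split; first exact: inim_back.
    by rewrite mulmxBr -scalemxAr -Ev scalerDr scalerA addrK.
  have Hmax : c ord_max = 0.
    rewrite big1 ?add0r in Ev; last by move=> a _; rewrite Hc scale0r.
    have : A *m (d - (t * c ord_max) *: ek k) = 0.
      by rewrite mulmxBr -scalemxAr -Ev scalerA subrr.
    move/Hinj/matrixP => /(_ (Ordinal Hkm) 0).
    rewrite !mxE /= Hd // eqxx mulr1 sub0r => /eqP; rewrite oppr_eq0 => /eqP.
    exact: Ht.
  move=> o; case: (unliftP ord_max o) => [a ->|->] //.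
  have -> : lift ord_max a = widen_ord (leqnSn r) a by apply/val_inj; exact: (lift_max a).
  exact: Hc.
Qed.

Lemma mu_step p A k K : muP p (inim k.+1 A) K -> muP p (inim k A) K.+1.
Proof.
move=> [x Hsp].
exists (xext x (A *m ek k)) => y.
have [s [Hs [c [v [Hv Hy]]]]] := Hsp y.
have [c' [v1 [Hv1 Ev]]] := inim_step Hv.
exists s; split => //.
exists (fun o : 'I_ _.+1 => if unlift ord_max o is Some a then c a else c'), v1; split => //.
rewrite sum_xext unlift_none Hy Ev.
rewrite [in X in _ = X](eq_bigr (fun a => c a *: x a)); last by move=> a _; rewrite unlift_widen.
by rewrite addrA addrAC.
Qed.

Lemma rk_iter A q : (forall c : 'cV[R]_m, A *m c = 0 -> c = 0) -> forall k r, (k + q <= m)%N ->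
  rkP (inim (k + q)%N A) r -> rkP (inim k A) (r + q)%N.
Proof.
move=> Hinj; elim: q => [|q IH] k r Hk H; first by move: H; rewrite !addn0.
rewrite addnS; apply: rk_step => //; first by move: Hk; lia.
apply: IH; first by rewrite addSnnS.
by rewrite addSnnS.
Qed.

Lemma mu_iter p A q : forall k K, muP p (inim (k + q)%N A) K -> muP p (inim k A) (K + q)%N.
Proof.
elim: q => [|q IH] k K H; first by move: H; rewrite !addn0.
rewrite addnS; apply: mu_step; apply: IH; by rewrite addSnnS.
Qed.

Lemma rkP_ext (P Q : 'cV[R]_n -> Prop) r : (forall v, P v <-> Q v) -> rkP P r -> rkP Q r.
Proof.
move=> PQ [x [H1 H2]]; exists x; split.
- move=> y; have [s [Hs [c [v [Hv E]]]]] := H1 y.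
  by exists s; split => //; exists c, v; split => //; apply/PQ.
- move=> c [t [Ht [v [Hv E]]]]; apply: H2; exists t; split => //; exists v; split => //.
  by apply/PQ.
Qed.

Lemma muP_ext p (P Q : 'cV[R]_n -> Prop) r : (forall v, P v <-> Q v) -> muP p P r -> muP p Q r.
Proof.
move=> PQ [x H1]; exists x.
move=> y; have [s [Hs [c [v [Hv E]]]]] := H1 y.
by exists s; split => //; exists c, v; split => //; apply/PQ.
Qed.
End Aux.

Section Drop.
Variable R : comNzRingType.
Variables n m i : nat.
Variable A : 'M[R]_(n, m).

Local Notation w := (widen_ord (leq_subr i m)).

Definition ext (d2 : 'cV[R]_(m - i)) : 'cV[R]_m :=
  \col_(o < m) \sum_(o2 < m - i | w o2 == o) d2 o2 0.

Lemma mul_dropcols d2 : dropcols i A *m d2 = A *m ext d2.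
Proof.
apply/matrixP => l z; rewrite (ord1 z) !mxE.
rewrite [RHS](eq_bigr (fun o => \sum_(o2 < m - i | w o2 == o) A l o * d2 o2 0)); last first.
  by move=> o _; rewrite mxE big_distrr.
rewrite (exchange_big_dep predT) //=; apply eq_bigr => o2 _.
rewrite (eq_bigl (fun o => o == w o2)) ?big_pred1_eq; last by move=> o; rewrite eq_sym.
by rewrite mxE.
Qed.

Lemma ext_supp d2 (o : 'I_m) : (m - i <= o)%N -> ext d2 o 0 = 0.
Proof.
move=> Ho; rewrite mxE big1 // => o2 /eqP E.
by move: (ltn_ord o2); rewrite -[nat_of_ord o2]/(nat_of_ord (w o2)) E ltnNge Ho.
Qed.

Lemma ext_w d2 o2 : ext d2 (w o2) 0 = d2 o2 0.
Proof.
rewrite mxE (bigD1 o2) //= big1 ?addr0 // => o3 /andP [/eqP E N].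
by move: N; rewrite (_ : o3 = o2) ?eqxx //; apply/val_inj; move: E => /(congr1 val).
Qed.

Lemma dropcols_im v : (exists d2, v = dropcols i A *m d2) <-> inim (m - i) A v.
Proof.
split.
  by case=> d2 ->; exists (ext d2); split; [exact: ext_supp | exact: mul_dropcols].
case=> d [Hd ->]; exists (\col_o2 d (w o2) 0); rewrite mul_dropcols; congr (_ *m _).
apply/matrixP => o z; rewrite (ord1 z).
case: (ltnP o (m - i)) => Ho.
  have E : o = w (Ordinal Ho) by apply/val_inj.
  by rewrite E ext_w mxE.
by rewrite ext_supp // Hd.
Qed.
End Drop.

Section Conv.
Variable R : comNzRingType.
Variables n m : nat.
Variable A : 'M[R]_(n, m).

Lemma has_rank_rkP r : has_rank A r <-> rkP (fun v => exists d, v = A *m d) r.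
Proof.
split => [[x [H1 H2]]|[x [H1 H2]]]; exists x; split.
- move=> y; have [s [Hs [c [d E]]]] := H1 y; exists s; split => //.
  by exists c, (A *m d); split => //; exists d.
- move=> c [t [Ht [v [[d ->] E]]]]; apply: H2; exists t; split => //; by exists d.
- move=> y; have [s [Hs [c [v [[d ->] E]]]]] := H1 y; exists s; split => //; by exists c, d.
- move=> c [t [Ht [d E]]]; apply: H2; exists t; split => //.
  by exists (A *m d); split => //; exists d.
Qed.

Lemma mu_loc_muP p k : mu_loc_le p A k <-> muP p (fun v => exists d, v = A *m d) k.
Proof.
split => [[x H1]|[x H1]]; exists x.
- move=> y; have [s [Hs [c [d E]]]] := H1 y; exists s; split => //.
  by exists c, (A *m d); split => //; exists d.
- move=> y; have [s [Hs [c [v [[d ->] E]]]]] := H1 y; exists s; split => //; by exists c, d.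
Qed.
End Conv.

Section Max.
Variable R : comNzRingType.

Lemma ideal_sum (I : R -> Prop) k (F : 'I_k -> R) :
  is_ideal I -> (forall j, I (F j)) -> I (\sum_(j < k) F j).
Proof.
move=> [H0 [HD HM]] HF; apply: (big_ind I) => //.
Qed.

Lemma exists_maximal : noetherian R -> exists M : R -> Prop, is_maximal M.
Proof.
move=> HN; apply: NNPP => Hno.
pose Pr (I J : R -> Prop) := is_ideal I -> ~ I 1 ->
   is_ideal J /\ ~ J 1 /\ (forall x, I x -> J x) /\ exists x, J x /\ ~ I x.
have Hex : forall I, exists J, Pr I J.
  move=> I; case: (classic (is_ideal I /\ ~ I 1)) => [[HI HI1]|HC]; last first.
    by exists I => HI HI1; case: HC.
  have HnM : ~ is_maximal I by move=> HM; apply: Hno; exists I.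
  apply: NNPP => Hc; apply: HnM; split => //; split => // J HJ HIJ.
  case: (classic (J 1)) => [|HJ1]; [by left | right].
  move=> x Jx; apply: NNPP => nIx; apply: Hc; exists J => _ _.
  by split => //; split => //; split => //; exists x.
pose f I := proj1_sig (constructive_indefinite_description _ (Hex I)).
have Hf : forall I, Pr I (f I) := fun I => proj2_sig (constructive_indefinite_description _ (Hex I)).
pose C k := iter k f (fun x : R => x = 0).
have HC : forall k, is_ideal (C k) /\ ~ C k 1.
  elim => [|k [IH1 IH2]].
    split; last by move=> /eqP; rewrite oner_eq0.
    split => //; split; first by move=> a b -> ->; rewrite addr0.
    by move=> a b ->; rewrite mulr0.
  by have [? [? _]] := Hf _ IH1 IH2.
have Hmono : forall a b x, (a <= b)%N -> C a x -> C b x.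
  move=> a b x; elim: b => [|b IH]; first by rewrite leqn0 => /eqP ->.
  rewrite leq_eqVlt => /orP [/eqP -> //|]; rewrite ltnS => Hab Cax.
  have [H1 H2] := HC b; have [_ [_ [Hsub _]]] := Hf _ H1 H2.
  exact: Hsub (IH Hab Cax).
pose U x := exists k, C k x.
have HU : is_ideal U.
  split; first by exists 0%N.
  split.
    move=> a b [ka Ha] [kb Hb]; exists (maxn ka kb).
    have [[_ [HD _]] _] := HC (maxn ka kb).
    by apply: HD; [apply: Hmono Ha; apply: leq_maxl | apply: Hmono Hb; apply: leq_maxr].
  move=> a b [kb Hb]; exists kb; have [[_ [_ HM]] _] := HC kb; exact: HM.
have [K [g Hg]] := HN U HU.
have HgU : forall j, U (g j).
  move=> j; apply/Hg; exists (fun l => (l == j)%:R).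
  rewrite (bigD1 j) //= eqxx mul1r big1 ?addr0 // => l /negbTE ->; by rewrite mul0r.
pose kk j := proj1_sig (constructive_indefinite_description _ (HgU j)).
have Hkk : forall j, C (kk j) (g j) := fun j => proj2_sig (constructive_indefinite_description _ (HgU j)).
pose N := (\max_(j < K) kk j)%N.
have HUN : forall x, U x -> C N x.
  move=> x /Hg [c ->]; have [HI _] := HC N; apply: ideal_sum => // j.
  have [_ [_ HM]] := HI; apply: HM; apply: Hmono (Hkk j).
  exact: (leq_bigmax_cond j).
have [H1 H2] := HC N; have [_ [_ [_ [x [Hx Hnx]]]]] := Hf _ H1 H2.
by apply: Hnx; apply: HUN; exists N.+1.
Qed.
End Max.

Theorem lemma2p6 (R : comNzRingType) (n e : nat) (phi : 'M[R]_(n, n - e)) :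
  noetherian R -> (e <= n)%N ->
  pd_one phi -> has_rank phi e -> mu_eq phi n -> minimal_pres phi ->
  (forall i, (1 <= i)%N -> (i <= n - e - 1)%N ->
      pd_one (dropcols i phi) /\ has_rank (dropcols i phi) (e + i)) /\
  (forall s i j, (i <= j)%N -> (j <= n - e)%N ->
      satisfies_G s (dropcols i phi) -> satisfies_G s (dropcols j phi)).
Proof.
move=> HN Hen [Hinj Hnsplit] Hrk Hmu Hmin.
have key : forall i j r, (i <= j)%N -> (j <= n - e)%N ->
    has_rank (dropcols i phi) r -> has_rank (dropcols j phi) (r + (j - i))%N.
  move=> i j r Hij Hj Hr.
  apply/has_rank_rkP; apply: (rkP_ext (P := inim (n - e - j) phi)).
    by move=> v; split => /dropcols_im.
  have E : (n - e - j + (j - i) = n - e - i)%N by lia.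
  apply: rk_iter => //; first by rewrite E leq_subr.
  rewrite E; move/has_rank_rkP: Hr; apply: rkP_ext => v; exact: dropcols_im.
split.
  move=> i Hi1 Hi2; split; last first.
    have Hr0 : has_rank (dropcols 0 phi) e.
      move/has_rank_rkP: Hrk => Hrk; apply/has_rank_rkP.
      apply: (rkP_ext (P := inim (n - e - 0)%N phi)).
        by move=> v; split => /dropcols_im.
      by move: Hrk; apply: rkP_ext => v; rewrite subn0 inim_all.
    have := key 0%N i e (leq0n _) (leq_trans Hi2 (leq_subr _ _)) Hr0.
    by rewrite subn0.
  split.
    move=> c Hc.
    have : phi *m ext c = 0 by rewrite -mul_dropcols.
    move/Hinj => He; apply/matrixP => o z; rewrite (ord1 z) -ext_w He !mxE //.
  move=> [B HB].
  have [M HM] := exists_maximal HN.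
  have Hm0 : (0 < n - e - i)%N by lia.
  pose o := Ordinal Hm0.
  move/matrixP: HB => /(_ o o); rewrite !mxE eqxx /= mulr1n => HS.
  have [HI [HM1 _]] := HM; have [_ [_ HMul]] := HI.
  apply: HM1; rewrite -HS; apply: ideal_sum => // l.
  by apply: HMul; rewrite /dropcols mxE; apply: Hmin.
move=> s i j Hij Hj [r [Hr HG]]; exists (r + (j - i))%N; split.
  exact: key.
move=> p Hp d Hd H1 H2.
have := HG p Hp d Hd H1 H2.
move/mu_loc_muP => Hm.
change (mu_loc_le p (dropcols j phi) (d + (r + (j - i)))%N.-1).
have E1 : ((d + (r + (j - i))).-1 = (d + r).-1 + (j - i))%N by lia.
rewrite E1; apply/mu_loc_muP.
apply: (muP_ext (P := inim (n - e - j) phi)).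
  by move=> v; split => /dropcols_im.
have E : (n - e - j + (j - i) = n - e - i)%N by lia.
apply: mu_iter; rewrite E.
move: Hm; apply: muP_ext => v; exact: dropcols_im.
Qed.
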